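(* Let $\psi\in\mathcal C$, let $F_1,F_2:\mathbb R\to(0,\infty)$ be measurable with $I(F_1\circ\psi,\psi),I(F_2\circ\psi^*,\psi^* )\in(0,\infty)$, and assume $F_2\circ\psi^*\in\mathcal L_{\psi^*}$. Then for $p\in(0,\infty)$ and $f=e^{-\psi}$, $$G_{p,F_1,F_2}(\psi)\le[I(F_1\circ\psi,\psi)]^{\frac{n}{n+p}}[I(F_2\circ\psi^*,\psi^* )]^{\frac{p}{n+p}},\qquad G_p(f)\le[I(f)]^{\frac{n}{n+p}}[I(f^\circ)]^{\frac{p}{n+p}}.$$ For $p\in(-\infty,-n)\cup(-n,0)$ the same inequalities hold with $\le$ replaced by $\ge$.
   Context: $\mathcal C$ is the set of convex $\psi:\mathbb R^n\to\mathbb R\cup\{+\infty\}$ with domain of nonempty interior; $\psi^*(y)=\sup_x(\langle x,y\rangle-\psi(x))$; $\nabla^2\psi$ is the Alexandrov Hessian; $X_\psi=\{x:\psi(x)<\infty,\ \nabla^2\psi(x)\text{ exists and is invertible}\}$. $I(F\circ\psi,\psi)=\int_{X_\psi}F(\psi(x))dx$, $I(g,\psi^* )=\int_{X_{\psi^*}}g$; $\mathcal F^+_{\psi^*}$: integrable $g>0$ on $X_{\psi^*}$ with $0<I(g,\psi^* )<\infty$; $\mathcal L_{\psi^*}$: its log-concave members. For $-n\ne p\in\mathbb R$ and $g\in\mathcal F^+_{\psi^*}$, $V_{p,F_1,F_2}(\psi,g)=\int_{X_\psi}\big(\frac{F_2(\langle x,\nabla\psi(x)\rangle-\psi(x))}{g(\nabla\psi(x))}\big)^{p/n}F_1(\psi(x))dx$.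 The general $L_p$ geominimal surface area is $G_{p,F_1,F_2}(\psi)=\inf_{g\in\mathcal L_{\psi^*}}\{V_{p,F_1,F_2}(\psi,g)^{\frac{n}{n+p}}I(g,\psi^* )^{\frac{p}{n+p}}\}$ for $p\ge0$, and the same with $\sup$ for $-n\ne p<0$. For $f=e^{-\psi}$: $G_p(f)=G_{p,e^{-t},e^{-t}}(\psi)$, $f^\circ=e^{-\psi^*}$, $I(f)=\int_{X_\psi}f$, $I(f^\circ)=\int_{X_{\psi^*}}f^\circ$ (assumed in $(0,\infty)$). Standing assumption: all integrals are well defined. *)

(* Defs.v *)
(* R : realType, R^n rendered as 'rV[R]_n for the
   geometry and as n.-tuple R (with its product sigma-algebra) for integration. *)
From HB Require Import structures.
From mathcomp Require Import all_boot all_order all_algebra.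
From mathcomp Require Import all_classical all_reals all_analysis.
Set Implicit Arguments.
Unset Strict Implicit.
Unset Printing Implicit Defensive.
Import Order.TTheory GRing.Theory Num.Theory.
Import numFieldNormedType.Exports.
Local Open Scope classical_set_scope.
Local Open Scope ring_scope.

Definition dotv {R : realType} {n : nat} (x y : 'rV[R]_n) : R :=
  \sum_(i < n) x ord0 i * y ord0 i.

Definition convex_ext {R : realType} {n : nat} (phi : 'rV[R]_n -> \bar R) : Prop :=
  (forall x, phi x != -oo%E) /\
  forall (x y : 'rV[R]_n) (t : R), 0 < t < 1 ->
    (phi ((1 - t) *: x + t *: y)%R <= (1 - t)%:E * phi x + t%:E * phi y)%E.

Definition classC {R : realType} {n : nat} (psi : 'rV[R]_n -> \bar R) : Prop :=
  convex_ext psi /\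
  exists (x : 'rV[R]_n) (r : R), 0 < r /\
    forall y, `|y - x| < r -> (psi y < +oo)%E.

Definition legendre {R : realType} {n : nat} (psi : 'rV[R]_n -> \bar R)
  (y : 'rV[R]_n) : \bar R :=
  ereal_sup [set ((dotv x y)%:E - psi x)%E | x in [set: 'rV[R]_n]].

Definition alex_expansion {R : realType} {n : nat} (psi : 'rV[R]_n -> \bar R)
  (x v : 'rV[R]_n) (A : 'M[R]_n) : Prop :=
  A^T = A /\ psi x \is a fin_num /\
  forall e : R, 0 < e -> exists2 d : R, 0 < d &
    forall y : 'rV[R]_n, `|y - x| < d ->
      exists2 r : R, psi y = r%:E &
        `| r - fine (psi x) - dotv v (y - x)
             - 2^-1 * ((y - x) *m A *m (y - x)^T) ord0 ord0 |
          <= e * `|y - x| ^+ 2.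

Definition Xset {R : realType} {n : nat} (psi : 'rV[R]_n -> \bar R) : set 'rV[R]_n :=
  [set x | (psi x < +oo)%E /\
           exists v A, alex_expansion psi x v A /\ A \in unitmx].

(* gradient (from the Alexandrov expansion, unique when it exists) *)
Definition grad {R : realType} {n : nat} (psi : 'rV[R]_n -> \bar R)
  (x : 'rV[R]_n) : 'rV[R]_n :=
  xget 0 [set v | exists A, alex_expansion psi x v A].

Definition rowt {R : realType} {n : nat} (t : n.-tuple R) : 'rV[R]_n :=
  \row_(i < n) tnth t i.

(* mu is Lebesgue measure on R^n: its value on every box is the product of
   the side lengths (this determines the Borel measure uniquely). *)
Definition is_lebesgue_n {R : realType} {n : nat}
  (mu : {measure set (n.-tuple R) -> \bar R}) : Prop :=
  forall a b : n.-tuple R, (forall i, tnth a i <= tnth b i) ->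
    mu [set t | forall i, tnth a i < tnth t i <= tnth b i] =
    (\prod_(i < n) (tnth b i - tnth a i))%:E.

Definition Iover {R : realType} {n : nat}
  (mu : {measure set (n.-tuple R) -> \bar R}) (X : set 'rV[R]_n)
  (h : 'rV[R]_n -> R) : \bar R :=
  (\int[mu]_(t in [set t | X (rowt t)]) (h (rowt t))%:E)%E.

Definition LC {R : realType} {n : nat}
  (mu : {measure set (n.-tuple R) -> \bar R}) (psi : 'rV[R]_n -> \bar R)
  (g : 'rV[R]_n -> R) : Prop :=
  (forall y, Xset (legendre psi) y -> 0 < g y) /\
  mu.-integrable [set t | Xset (legendre psi) (rowt t)] (fun t => (g (rowt t))%:E) /\
  (0 < Iover mu (Xset (legendre psi)) g < +oo)%E /\
  exists phi : 'rV[R]_n -> \bar R, convex_ext phi /\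
    forall y, Xset (legendre psi) y -> phi y = (- ln (g y))%:E.

Definition Vp {R : realType} {n : nat}
  (mu : {measure set (n.-tuple R) -> \bar R}) (p : R) (F1 F2 : R -> R)
  (psi : 'rV[R]_n -> \bar R) (g : 'rV[R]_n -> R) : \bar R :=
  Iover mu (Xset psi) (fun x =>
    ((F2 (dotv x (grad psi x) - fine (psi x)) / g (grad psi x)) `^ (p / n%:R))
    * F1 (fine (psi x))).

Definition Gp {R : realType} {n : nat}
  (mu : {measure set (n.-tuple R) -> \bar R}) (p : R) (F1 F2 : R -> R)
  (psi : 'rV[R]_n -> \bar R) : \bar R :=
  let S := [set (Vp mu p F1 F2 psi g `^ (n%:R / (n%:R + p))
                 * Iover mu (Xset (legendre psi)) g `^ (p / (n%:R + p)))%E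
           | g in LC mu psi] in
  if 0 <= p then ereal_inf S else ereal_sup S.

Definition expm {R : realType} (t : R) : R := expR (- t).

(* Main.v *)
Require Import Defs.
From HB Require Import structures.
From mathcomp Require Import all_boot all_order all_algebra.
From mathcomp Require Import all_classical all_reals all_analysis.
From mathcomp Require Import ring lra measurable_realfun.
Import Order.TTheory GRing.Theory Num.Theory.
Import numFieldNormedType.Exports.
Local Open Scope classical_set_scope.
Local Open Scope ring_scope.
Section S.
Context {R : realType} {n : nat}.
Implicit Types x y v : 'rV[R]_n.

Lemma dotvC x y : dotv x y = dotv y x.
Proof. by apply: eq_bigr => i _; rewrite mulrC. Qed.

Lemma dotvBr x y v : dotv v (x - y) = dotv v x - dotv v y.
Proof.
rewrite /dotv -sumrB; apply: eq_bigr => i _; rewrite !mxE; ring.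
Qed.

Lemma dotvZr x v (t : R) : dotv v (t *: x) = t * dotv v x.
Proof.
rewrite /dotv mulr_sumr; apply: eq_bigr => i _; rewrite !mxE; ring.
Qed.

Lemma normZ x (t : R) : `|t *: x| = `|t| * `|x|.
Proof. by rewrite normrZ. Qed.

Lemma quadZ (A : 'M[R]_n) x (t : R) :
  ((t *: x) *m A *m (t *: x)^T) ord0 ord0 = t * t * (x *m A *m x^T) ord0 ord0.
Proof.
by rewrite linearZ /= -!scalemxAl -scalemxAr scalerA mxE.
Qed.

Lemma exists_t (c d H K : R) : 0 < c -> 0 < d -> 0 <= H -> 0 <= K ->
  exists t, [/\ 0 < t, t < 1, t * H < d & t * K < c].
Proof.
move=> c0 d0 H0 K0.
pose t := Num.min (2^-1) (Num.min (d / (H+1)) (c / (K+1))).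
have h1 : 0 < d / (H + 1) by apply: divr_gt0 => //; lra.
have h2 : 0 < c / (K + 1) by apply: divr_gt0 => //; lra.
have t0 : 0 < t by rewrite /t !lt_min h1 h2 andbT; lra.
have ta : t <= 2^-1 by rewrite /t ge_min lexx.
have tb : t <= d / (H+1) by rewrite /t !ge_min lexx orbT.
have tc : t <= c / (K+1) by rewrite /t !ge_min lexx !orbT.
exists t; split => //; first lra.
- rewrite ler_pdivlMr in tb; last lra. nra.
- rewrite ler_pdivlMr in tc; last lra. nra.
Qed.

Lemma subgrad (psi : 'rV[R]_n -> \bar R) x v A :
  convex_ext psi -> alex_expansion psi x v A ->
  forall y, ((fine (psi x) + dotv v (y - x))%:E <= psi y)%E.
Proof.
move=> [ninf cvx] [_ [finx ex]] y.
case Hy: (psi y) => [b| |]; last 2 first.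
- exact: leey.
- by move: (ninf y); rewrite Hy.
set a := fine (psi x).
have Hx : psi x = a%:E by rewrite /a fineK.
set h := y - x.
set K := (h *m A *m h^T) ord0 ord0.
rewrite lee_fin leNgt; apply/negP => Hc.
have c0 : 0 < a + dotv v h - b by lra.
have [d d0 Hd] := ex 1 ltr01.
have [t [t0 t1 td tc]] := @exists_t _ _ _ _ c0 d0 (normr_ge0 h)
   (addr_ge0 (exprn_ge0 2 (normr_ge0 h)) (normr_ge0 K)).
pose z := (1 - t) *: x + t *: y.
have zx : z - x = t *: h.
  by apply/rowP => i; rewrite /z /h !mxE; ring.
have := cvx x y t; rewrite t0 t1 => /(_ isT).
rewrite -/z Hx Hy -!EFinM -EFinD => cz.
have [r Hr Hr'] : exists2 r, psi z = r%:E & `| r - a - dotv v (z - x)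
             - 2^-1 * ((z - x) *m A *m (z - x)^T) ord0 ord0 | <= 1 * `|z - x| ^+ 2.
  apply: Hd; rewrite zx normrZ gtr0_norm //.
move: cz; rewrite Hr lee_fin => cz.
move: Hr'; rewrite zx dotvZr quadZ normrZ gtr0_norm // -/K mul1r => Hr'.
move: Hr'; rewrite ler_norml => /andP [H1 _].
have : `|K| <= `|K| by [].
rewrite ler_norml => /andP [H5 _].
set nh := `|h| in H1 td tc *; set nK := `|K| in H5 tc *.
have tt0 : 0 <= t * t by nra.
have H6 := ler_wpM2l tt0 H5.
have H7 : 0 <= t * t * nh ^+ 2 by nra.
have : t * (a + dotv v h - b) <= t * (t * (nh ^+ 2 + nK)).
  rewrite exprMn in H1. have H8 : 0 <= t * t * nK by apply: mulr_ge0 => //; exact: normr_ge0. nra.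
rewrite ler_pM2l //; lra.
Qed.

Lemma legendre_grad (psi : 'rV[R]_n -> \bar R) x v A :
  convex_ext psi -> alex_expansion psi x v A ->
  legendre psi v = (dotv x v - fine (psi x))%:E.
Proof.
move=> cv ae.
have sg := subgrad psi x v A cv ae.
have Hx : psi x = (fine (psi x))%:E by case: ae => _ [fx _]; rewrite fineK.
apply/eqP; rewrite eq_le; apply/andP; split.
- apply: ge_ereal_sup => _ [z _ <-].
  have := sg z; case: (psi z) => [c| |].
  + rewrite lee_fin dotvBr -!EFinB lee_fin (dotvC z v) (dotvC x v); lra.
  + by move=> _; rewrite /= leNye.
  + by rewrite leeNy_eq.
- apply: ereal_sup_ubound; exists x => //; rewrite {1}Hx -EFinB //.
Qed.

Lemma grad_spec (psi : 'rV[R]_n -> \bar R) x :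
  Xset psi x -> exists A, alex_expansion psi x (grad psi x) A.
Proof.
move=> [_ [v [A [ae _]]]].
exact: (xgetPex 0 (P := [set v | exists A, alex_expansion psi x v A]) (ex_intro _ v (ex_intro _ A ae))).
Qed.

Lemma Vp_eq (mu : {measure set (n.-tuple R) -> \bar R}) p F1 F2 psi :
  convex_ext psi -> (forall t, 0 < F2 t) ->
  Vp mu p F1 F2 psi (fun y => F2 (fine (legendre psi y))) =
  Iover mu (Xset psi) (fun x => F1 (fine (psi x))).
Proof.
move=> cv F2p; rewrite /Vp /Iover; apply: eq_integral => t; rewrite inE => Xt.
have [A ae] := grad_spec psi (rowt t) Xt.
rewrite (legendre_grad psi (rowt t) _ A cv ae) /= divff ?powR1 ?mul1r //.
by rewrite gt_eqF.
Qed.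

Lemma Gp_bounds (mu : {measure set (n.-tuple R) -> \bar R}) F1 F2 psi :
  convex_ext psi -> (forall t, 0 < F2 t) ->
  LC mu psi (fun y => F2 (fine (legendre psi y))) ->
  (forall p : R, 0 < p ->
     (Gp mu p F1 F2 psi <=
        Iover mu (Xset psi) (fun x => F1 (fine (psi x))) `^ (n%:R / (n%:R + p))
      * Iover mu (Xset (legendre psi)) (fun y => F2 (fine (legendre psi y)))
          `^ (p / (n%:R + p)))%E) /\
  (forall p : R, p < 0 ->
     (Iover mu (Xset psi) (fun x => F1 (fine (psi x))) `^ (n%:R / (n%:R + p))
      * Iover mu (Xset (legendre psi)) (fun y => F2 (fine (legendre psi y)))
          `^ (p / (n%:R + p)) <= Gp mu p F1 F2 psi)%E).
Proof.
move=> cv F2p LCg; split => p p0; rewrite /Gp.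
- rewrite ifT; last exact: ltW.
  apply: ereal_inf_lbound; exists (fun y => F2 (fine (legendre psi y))) => //.
  by rewrite (Vp_eq mu p F1 F2 psi cv F2p).
- rewrite ifF; last by apply/negbTE; rewrite -ltNge.
  apply: ereal_sup_ubound; exists (fun y => F2 (fine (legendre psi y))) => //.
  by rewrite (Vp_eq mu p F1 F2 psi cv F2p).
Qed.
Lemma dotvDZ v x y (a b : R) : dotv v (a *: x + b *: y) = a * dotv v x + b * dotv v y.
Proof.
rewrite /dotv !mulr_sumr -big_split; apply: eq_bigr => i _; rewrite !mxE; rewrite /=; ring.
Qed.

Lemma legendre_convex (psi : 'rV[R]_n -> \bar R) :
  classC psi -> convex_ext (legendre psi).
Proof.
move=> [[ninf cvx] [x0 [r0 [r00 H0]]]].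
have Hx0 : (psi x0 < +oo)%E by apply: H0; rewrite subrr normr0.
have fx0 : psi x0 \is a fin_num by rewrite fin_numE ninf /= lt_eqF.
have lb y : ((dotv x0 y - fine (psi x0))%:E <= legendre psi y)%E.
  by apply: ereal_sup_ubound; exists x0 => //; rewrite EFinB fineK.
split.
- move=> y; apply/negP => /eqP H; have := lb y; rewrite H leeNy_eq //.
- move=> y z t /andP [t0 t1].
  apply: ge_ereal_sup => _ [x _ <-].
  have := ninf x; case Hx: (psi x) => [c| |] // _; last by rewrite /= leNye.
  have l1 : ((dotv x y - c)%:E <= legendre psi y)%E.
    by apply: ereal_sup_ubound; exists x => //; rewrite Hx EFinB.
  have l2 : ((dotv x z - c)%:E <= legendre psi z)%E.
    by apply: ereal_sup_ubound; exists x => //; rewrite Hx EFinB.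
  apply: le_trans (leeD (lee_wpmul2l _ l1) (lee_wpmul2l _ l2)); last 2 first.
  + by rewrite lee_fin; lra.
  + by rewrite lee_fin; lra.
  rewrite -!EFinM -EFinD lee_fin dotvDZ; lra.
Qed.

Definition box (q : n.-tuple rat) (r : rat) : set (n.-tuple R) :=
  [set t | forall j, `|tnth t j - ratr (tnth q j)| < ratr r].

Lemma box_meas q r : measurable (box q r).
Proof.
have -> : box q r = \bigcap_(j in [set: 'I_n])
   ((fun t => tnth t j) @^-1` `](ratr (tnth q j) - ratr r), (ratr (tnth q j) + ratr r)[%classic).
  apply/seteqP; split => t /= H.
  - by move=> j _; rewrite /= in_itv /= -ltr_distlC distrC.
  - by move=> j; have := H j I; rewrite /= in_itv /= -ltr_distlC distrC.
apply: fin_bigcap_measurable; first exact: finite_finset.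
move=> j _; have := measurable_tnth j measurableT (measurable_itv `](ratr (tnth q j) - ratr r), (ratr (tnth q j) + ratr r)[).
rewrite -[X in measurable X]setTI; move=> h; exact: h.
Qed.

Lemma dot_bound x (s t : n.-tuple R) (e : R) :
  (forall j, `|tnth s j - tnth t j| <= e) ->
  `|dotv x (rowt s) - dotv x (rowt t)| <= (\sum_(j < n) `|x ord0 j|) * e.
Proof.
move=> H; rewrite -dotvBr /dotv mulr_suml.
apply: le_trans (ler_norm_sum _ _ _) _; apply: ler_sum => j _.
rewrite !mxE normrM; apply: ler_wpM2l => //.
Qed.
End S.
Section T.
Context {R : realType} {n : nat}.
Implicit Types x y v : 'rV[R]_n.

Lemma legendre_open_meas (psi : 'rV[R]_n -> \bar R) (a : R) :
  (forall x, psi x != -oo%E) ->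
  measurable [set t : n.-tuple R | (a%:E < legendre psi (rowt t))%E].
Proof.
move=> ninf.
set O := [set t : n.-tuple R | _].
have -> : O = \bigcup_(i : n.-tuple rat * rat)
    (box i.1 i.2 `&` [set _ | box i.1 i.2 `<=` O]).
  apply/seteqP; split => t; last by move=> [[q r] _ [Hb Hs]]; exact: Hs.
  move=> Ot; have [_ [x _ <-] Hx] := ereal_sup_gt Ot.
  move: Hx; have := ninf x; case Hc: (psi x) => [c| |] // _.
  rewrite -EFinB lte_fin => Hx.
  set M := \sum_(j < n) `|x ord0 j|.
  have M0 : 0 <= M by apply: sumr_ge0 => j _; exact: normr_ge0.
  set eps := dotv x (rowt t) - c - a.
  have e0 : 0 < eps by rewrite /eps; lra.
  have e1 : 0 < eps / (2 * (M + 1)) by apply: divr_gt0 => //; lra.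
  have [r] := rat_in_itvoo e1; rewrite in_itv /= => /andP [r0 r1].
  have qex : forall j : 'I_n, exists q : rat,
      ratr q \in `](tnth t j - ratr r), (tnth t j + ratr r)[.
    move=> j; apply: rat_in_itvoo; lra.
  have [qf Hq] := choice qex.
  exists ([tuple qf j | j < n], r) => //; split.
  - move=> j /=; rewrite tnth_mktuple; have := Hq j.
    by rewrite in_itv /= -ltr_distlC.
  - move=> s Hs; rewrite /O /=.
    apply: (@lt_le_trans _ _ ((dotv x (rowt s))%:E - psi x)%E); last first.
      by apply: ereal_sup_ubound; exists x.
    rewrite Hc -EFinB lte_fin.
    have Hb : forall j, `|tnth s j - tnth t j| <= 2 * ratr r.
      move=> j; have := Hs j; have := Hq j; rewrite /= tnth_mktuple.
      rewrite in_itv /= -ltr_distlC => h1 h2.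
      have := ler_distD (ratr (qf j)) (tnth s j) (tnth t j).
      rewrite (distrC (ratr (qf j))) => h3; lra.
    have := dot_bound x s t (2 * ratr r) Hb.
    rewrite ltr_pdivlMr in r1; last lra.
    have : M * (2 * ratr r) < eps by nra.
    move=> h1; rewrite -/M ler_norml => /andP [h2 _].
    rewrite /eps in h1; lra.
apply: countable_bigcupT_measurable; first exact: countableP.
move=> [q r] /=; apply: measurableI; first exact: box_meas.
case: (pselect (box q r `<=` O)) => h.
- by rewrite (_ : [set _ | _] = setT) //; apply/seteqP; split.
- by rewrite (_ : [set _ | _] = set0) //; apply/seteqP; split.
Qed.

Lemma meas_fine_leg (psi : 'rV[R]_n -> \bar R) :
  (forall y, legendre psi y != -oo%E) -> (forall x, psi x != -oo%E) ->
  measurable_fun [set t : n.-tuple R | Xset (legendre psi) (rowt t)]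
    (fun t => fine (legendre psi (rowt t))).
Proof.
move=> ninfL ninf mD; apply: (measurability _ (RGenOInfty.measurableE R)) => //.
move=> /= _ [_ [a ->] <-].
rewrite (_ : _ `&` _ = [set t | Xset (legendre psi) (rowt t)] `&`
     [set t | (a%:E < legendre psi (rowt t))%E]).
  by apply: measurableI => //; exact: legendre_open_meas.
apply/seteqP; split => t /= [Dt Ht]; split => //.
- have fL : legendre psi (rowt t) \is a fin_num.
    by rewrite fin_numE ninfL /= lt_eqF //; case: Dt.
  by move: Ht; rewrite in_itv /= andbT -lte_fin fineK.
- have fL : legendre psi (rowt t) \is a fin_num.
    by rewrite fin_numE ninfL /= lt_eqF //; case: Dt.
  by rewrite in_itv /= andbT -lte_fin fineK.
Qed.

Lemma LC_expm (mu : {measure set (n.-tuple R) -> \bar R}) (psi : 'rV[R]_n -> \bar R) :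
  classC psi ->
  (0 < Iover mu (Xset (legendre psi)) (fun y => expm (fine (legendre psi y))) < +oo)%E ->
  LC mu psi (fun y => expm (fine (legendre psi y))).
Proof.
move=> cC HI; have cL := legendre_convex psi cC.
have [ninfL _] := cL; have ninf := cC.1.1.
split; first by move=> y _; exact: expR_gt0.
split; last split => //.
- apply/integrableP; split.
  + apply/measurable_EFinP.
    have mexpm : measurable_fun [set: R] (@expm R) := measurableT_comp (@measurable_expR R) (measurable_funN (@measurable_id _ _ [set: R])).
    exact: (measurableT_comp mexpm (meas_fine_leg psi ninfL ninf)).
  + move: HI => /andP [_ HI]; rewrite /Iover in HI.
    apply: le_lt_trans HI; rewrite le_eqVlt; apply/orP; left; apply/eqP.
    apply: eq_integral => t _; rewrite /= ger0_norm //; exact: expR_ge0.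
- exists (legendre psi); split => // y [Ly _].
  have fL : legendre psi y \is a fin_num by rewrite fin_numE ninfL /= lt_eqF.
  by rewrite /expm expRK opprK fineK.
Qed.
End T.
Theorem proposition2p2 (R : realType) (n : nat)
  (mu : {measure set (n.-tuple R) -> \bar R})
  (psi : 'rV[R]_n -> \bar R) (F1 F2 : R -> R) :
  (0 < n)%N -> is_lebesgue_n mu -> classC psi ->
  (forall t, 0 < F1 t) -> (forall t, 0 < F2 t) ->
  measurable_fun [set: R] F1 -> measurable_fun [set: R] F2 ->
  (0 < Iover mu (Xset psi) (fun x => F1 (fine (psi x))) < +oo)%E ->
  (0 < Iover mu (Xset (legendre psi)) (fun y => F2 (fine (legendre psi y))) < +oo)%E ->
  LC mu psi (fun y => F2 (fine (legendre psi y))) ->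
  (0 < Iover mu (Xset psi) (fun x => expm (fine (psi x))) < +oo)%E ->
  (0 < Iover mu (Xset (legendre psi)) (fun y => expm (fine (legendre psi y))) < +oo)%E ->
  (forall p : R, 0 < p ->
     (Gp mu p F1 F2 psi <=
        Iover mu (Xset psi) (fun x => F1 (fine (psi x))) `^ (n%:R / (n%:R + p))
      * Iover mu (Xset (legendre psi)) (fun y => F2 (fine (legendre psi y)))
          `^ (p / (n%:R + p)))%E /\
     (Gp mu p expm expm psi <=
        Iover mu (Xset psi) (fun x => expm (fine (psi x))) `^ (n%:R / (n%:R + p))
      * Iover mu (Xset (legendre psi)) (fun y => expm (fine (legendre psi y)))
          `^ (p / (n%:R + p)))%E) /\
  (forall p : R, p < 0 -> p != - n%:R ->
     (Iover mu (Xset psi) (fun x => F1 (fine (psi x))) `^ (n%:R / (n%:R + p))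
      * Iover mu (Xset (legendre psi)) (fun y => F2 (fine (legendre psi y)))
          `^ (p / (n%:R + p)) <= Gp mu p F1 F2 psi)%E /\
     (Iover mu (Xset psi) (fun x => expm (fine (psi x))) `^ (n%:R / (n%:R + p))
      * Iover mu (Xset (legendre psi)) (fun y => expm (fine (legendre psi y)))
          `^ (p / (n%:R + p)) <= Gp mu p expm expm psi)%E).
Proof.
move=> n0 leb cC F1p F2p mF1 mF2 I1 I2 LCF2 I3 I4.
have cv := cC.1.
have [A1 A2] := Gp_bounds mu F1 F2 psi cv F2p LCF2.
have expp : forall t : R, 0 < expm t by move=> t; exact: expR_gt0.
have [B1 B2] := Gp_bounds mu (@expm R) (@expm R) psi cv expp (LC_expm mu psi cC I4).
split => p p0; [split; [exact: A1|exact: B1] | move=> _; split; [exact: A2|exact: B2]].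
Qed.
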